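(* Let $k\ge4$, $n\ge 2k$, and let $\mathcal F,\mathcal G\subset\binom{[n]}{k}$ be cross-intersecting. Suppose that for some $\{x,y\}\in\binom{[n]}{2}$, $$|\mathcal F(x,y)|\ge\binom{n-3}{k-3}+\binom{n-4}{k-3}+\binom{n-6}{k-4}.$$ Then $|\mathcal G(\bar x,\bar y)|\le\binom{n-5}{k-3}+\binom{n-6}{k-3}$.
   Context: Cross-intersecting: $F\cap G\ne\emptyset$ for all $F\in\mathcal F,G\in\mathcal G$. $\mathcal F(x,y)=\{F\setminus\{x,y\}:F\in\mathcal F,\ \{x,y\}\subset F\}$ and $\mathcal G(\bar x,\bar y)=\{G\in\mathcal G: G\cap\{x,y\}=\emptyset\}$. *)

(* Defs.v *)
From mathcomp Require Import all_boot.
Set Implicit Arguments. Unset Strict Implicit. Unset Printing Implicit Defensive.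

Definition k_uniform (n k : nat) (F : {set {set 'I_n}}) : Prop :=
  forall A, A \in F -> #|A| = k.

Definition cross_intersecting (n : nat) (F G : {set {set 'I_n}}) : Prop :=
  forall A B, A \in F -> B \in G -> A :&: B != set0.

Definition link2 (n : nat) (F : {set {set 'I_n}}) (x y : 'I_n) : {set {set 'I_n}} :=
  [set A :\: [set x; y] | A in [set A in F | [set x; y] \subset A]].

Definition avoid2 (n : nat) (G : {set {set 'I_n}}) (x y : 'I_n) : {set {set 'I_n}} :=
  [set B in G | [disjoint B & [set x; y]]].

(* Main.v *)
Require Import Defs.
From mathcomp Require Import all_boot zify.
Set Implicit Arguments. Unset Strict Implicit. Unset Printing Implicit Defensive.

Section Shadow.
Variable T : finType.
Implicit Types (C D : {set {set T}}) (A B E : {set T}).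

Definition shadow C : {set {set T}} :=
  [set E | [exists A in C, exists x in A, E == A :\ x]].

Lemma shadowP C E :
  reflect (exists2 A, A \in C & exists2 x, x \in A & E = A :\ x) (E \in shadow C).
Proof.
rewrite inE; apply: (iffP idP).
- case/exists_inP => A AinC /exists_inP [x xA /eqP ->].
  by exists A => //; exists x.
- case=> A AinC [x xA ->]; apply/exists_inP; exists A => //.
  by apply/exists_inP; exists x.
Qed.

Lemma mem_shadow C A x : A \in C -> x \in A -> A :\ x \in shadow C.
Proof. by move=> AinC xA; apply/shadowP; exists A => //; exists x. Qed.

Definition unif q C := forall A, A \in C -> #|A| = q.

Lemma shadow_ge q C A : unif q C -> A \in C -> q <= #|shadow C|.
Proof.
move=> uC AinC; rewrite -(uC A AinC).
have <- : #|[set A :\ x | x in A]| = #|A|.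
  apply: card_in_imset => x z xA zA /setP /(_ x).
  rewrite !inE eqxx xA /= andbT => /esym /negbFE.
  by rewrite eq_sym => /eqP.
apply: subset_leq_card; apply/subsetP => E /imsetP [x xA ->].
exact: mem_shadow.
Qed.

Section Shift.
Variables u j : T.
Definition sh A := u |: (A :\ j).
Definition shiftable C A := [&& j \in A, u \notin A & sh A \notin C].
Definition shift1 C A := if shiftable C A then sh A else A.
Definition shiftF C := [set shift1 C A | A in C].

Lemma shK A : j \in A -> u \notin A -> j |: (sh A :\ u) = A.
Proof.
move=> jA uA; rewrite /sh setU1K ?setD1K //.
by rewrite !inE negb_and uA orbT.
Qed.

Lemma card_shiftF C : #|shiftF C| = #|C|.
Proof.
apply: card_in_imset => A B AinC BinC; rewrite /shift1.
case sA: (shiftable C A); case sB: (shiftable C B) => //.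
- move: sA sB => /and3P [jA uA _] /and3P [jB uB _] e.
  by rewrite -(shK jA uA) -(shK jB uB) e.
- by move: sA => /and3P [_ _ /negP]; move=> h e; case: h; rewrite e.
- by move: sB => /and3P [_ _ /negP]; move=> h e; case: h; rewrite -e.
Qed.

Lemma card_sh A : j \in A -> u \notin A -> #|sh A| = #|A|.
Proof.
move=> jA uA; rewrite /sh cardsU1 (cardsD1 j A) jA !inE negb_and uA orbT.
by rewrite add1n.
Qed.

Lemma shift_unif q C : unif q C -> unif q (shiftF C).
Proof.
move=> uC E /imsetP [A AinC ->]; rewrite /shift1.
case sA: (shiftable C A); last exact: uC.
by move: sA => /and3P [jA uA _]; rewrite card_sh // uC.
Qed.

Lemma shD1 A x : x != u -> sh (A :\ x) = sh A :\ x.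
Proof.
move=> xu; apply/setP => z; rewrite !inE.
case: (eqVneq z u) => [->|zu] /=; first by rewrite eq_sym xu.
by rewrite andbCA.
Qed.

Lemma shD1u A : u \in A -> u != j -> sh (A :\ u) = A :\ j.
Proof.
move=> uA uj; apply/setP => z; rewrite !inE.
by case: (eqVneq z u) => [->|zu] /=; rewrite ?uA ?uj.
Qed.

Lemma shift_in C A : A \in C -> shift1 C A \in shiftF C.
Proof. by move=> AinC; apply/imsetP; exists A. Qed.

Lemma shadow_shift C : shadow (shiftF C) \subset shiftF (shadow C).
Proof.
apply/subsetP => E /shadowP [B /imsetP [A AinC ->] [x xB ->]].
rewrite /shift1 in xB *; case sA: (shiftable C A) in xB *.
- move: sA => /and3P [jA uA shA].
  case: (eqVneq x u) => [exu|xu].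
  + subst x; rewrite /sh setU1K; last by rewrite !inE negb_and uA orbT.
    have E0 : A :\ j \in shadow C by apply: mem_shadow.
    have <- : shift1 (shadow C) (A :\ j) = A :\ j.
      by rewrite /shift1 /shiftable !inE eqxx.
    exact: shift_in.
  + have xA : x \in A by move: xB; rewrite !inE (negbTE xu) /= => /andP [].
    have xj : x != j by move: xB; rewrite !inE (negbTE xu) /= => /andP [].
    rewrite -shD1 //.
    case: (boolP (sh (A :\ x) \in shadow C)) => hs.
    * have <- : shift1 (shadow C) (sh (A :\ x)) = sh (A :\ x).
        rewrite /shift1; case: ifP => // /and3P [_ + _].
        by rewrite /sh !inE eqxx.
      exact: shift_in.
    * have E0 : A :\ x \in shadow C by apply: mem_shadow.
      have <- : shift1 (shadow C) (A :\ x) = sh (A :\ x).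
        rewrite /shift1 /shiftable hs !inE jA eq_sym xj /=.
        by rewrite (negbTE uA) andbF.
      exact: shift_in.
- have E0 : A :\ x \in shadow C by apply: mem_shadow.
  have -> : A :\ x = shift1 (shadow C) (A :\ x); last exact: shift_in.
  rewrite /shift1; case sE: (shiftable _ _) => //.
  move: sE => /and3P [jE uE /negP []].
  case: (eqVneq x u) => [exu|xu].
  + subst x; have uj : u != j by move: jE; rewrite !inE eq_sym => /andP [].
    by rewrite shD1u //; apply: mem_shadow; move: jE; rewrite !inE => /andP [].
  + have uA : u \notin A by move: uE; rewrite !inE eq_sym xu.
    have jA : j \in A by move: jE; rewrite !inE => /andP [].
    have xj : x != j by move: jE; rewrite !inE eq_sym => /andP [].
    have : sh A \in C.
      by move: sA; rewrite /shiftable jA uA /= => /negbFE.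
    move=> shC; rewrite shD1 //; apply: mem_shadow => //.
    by rewrite !inE (negbTE xu) xj xB.
Qed.

Lemma card_shadow_shift C : #|shadow (shiftF C)| <= #|shadow C|.
Proof.
rewrite -(card_shiftF (shadow C)); exact: subset_leq_card (shadow_shift C).
Qed.
End Shift.
End Shadow.

Section Split.
Variable T : finType.
Implicit Types (C D : {set {set T}}) (A B E : {set T}).

Lemma exists_shifted (u : T) q C : unif q C -> exists D,
  [/\ unif q D, #|D| = #|C|, #|shadow D| <= #|shadow C| &
      forall A, A \in D -> u \notin A -> forall j, j \in A -> u |: (A :\ j) \in D].
Proof.
move=> uC.
pose P D := [&& [forall A in D, #|A| == q], #|D| == #|C| & #|shadow D| <= #|shadow C|].
have PC : P C.
  rewrite /P eqxx leqnn !andbT; apply/forall_inP => A AinC; by rewrite uC.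
case: (arg_maxnP (fun D => #|[set A in D | u \in A]|) PC) => D PD maxD.
move: PD => /and3P [/forall_inP uD /eqP cD sD].
have uD' : unif q D by move=> A AD; apply/eqP; exact: uD.
exists D; split => // A AD uA j jA; apply/negPn/negP => nsh.
have PS : P (shiftF u j D).
  rewrite /P card_shiftF cD eqxx /=; apply/andP; split.
    apply/forall_inP => B BS; by rewrite (shift_unif uD' BS).
  exact: leq_trans (card_shadow_shift u j D) sD.
have := maxD _ PS; apply/negP; rewrite -ltnNge.
have sub : sh u j A |: [set B in D | u \in B] \subset [set B in shiftF u j D | u \in B].
  apply/subsetP => B; rewrite !inE => /orP [/eqP ->|/andP [BD uB]].
    rewrite inE; apply/andP; split; last by rewrite /sh !inE eqxx.
    have <- : shift1 u j D A = sh u j A.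
      by rewrite /shift1 /shiftable jA uA nsh.
    exact: shift_in.
  rewrite uB andbT.
  have <- : shift1 u j D B = B by rewrite /shift1 /shiftable uB andbF.
  exact: shift_in.
apply: leq_trans (subset_leq_card sub).
by rewrite cardsU1 inE (negbTE nsh).
Qed.

Lemma split_lem q C : unif q.+1 C -> exists D1 D0,
  [/\ unif q D1, unif q.+1 D0, #|C| = #|D1| + #|D0|,
      #|D1| + #|shadow D1| <= #|shadow C| & #|shadow D0| <= #|D1|].
Proof.
move=> uC.
case: (set_0Vmem C) => [C0|[A0 A0C]].
  exists set0, set0; split => //; rewrite ?C0 ?cards0 //.
  - by move=> A; rewrite inE.
  - by move=> A; rewrite inE.
  - have -> : shadow (set0 : {set {set T}}) = set0.
      by apply/setP => E; rewrite [RHS]inE; apply/negbTE/negP => /shadowP [A]; rewrite inE.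
    by rewrite cards0.
have : 0 < #|A0| by rewrite uC.
case/card_gt0P => u _.
case: (exists_shifted u uC) => D [uD cD sD shD].
pose S := [set B : {set T} | u \in B].
pose D1 := [set B :\ u | B in D :&: S].
pose D0 := D :\: S.
have cD1 : #|D1| = #|D :&: S|.
  apply: card_in_imset => B B' /setIP [_]; rewrite inE => uB /setIP [_].
  by rewrite inE => uB' e; rewrite -(setD1K uB) -(setD1K uB') e.
have D1P : forall E, E \in D1 -> exists2 B, B \in D & u \in B /\ E = B :\ u.
  by move=> E /imsetP [B /setIP [BD]]; rewrite inE => uB ->; exists B.
exists D1, D0; split.
- move=> E /D1P [B BD [uB ->]]; move: (uD B BD); rewrite (cardsD1 u) uB.
  by rewrite add1n => [[]].
- by move=> B /setDP [BD _]; exact: uD.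
- by rewrite cD1 cardsID cD.
- apply: leq_trans sD.
  pose I := [set u |: E | E in shadow D1].
  have cI : #|I| = #|shadow D1|.
    apply: card_in_imset => E E' /shadowP [F /D1P [B _ [uB ->]] [x _ ->]].
    move=> /shadowP [F' /D1P [B' _ [uB' ->]] [x' _ ->]] e.
    rewrite -(@setU1K _ u (B :\ u :\ x)); last by rewrite !inE eqxx andbF.
    rewrite -(@setU1K _ u (B' :\ u :\ x')); last by rewrite !inE eqxx andbF.
    by rewrite e.
  have disj : D1 :&: I = set0.
    apply/setP => E; rewrite !inE; apply/negP => /andP [/D1P [B _ [_ ->]]].
    by case/imsetP => F _ /setP /(_ u); rewrite !inE !eqxx.
  have : D1 :|: I \subset shadow D.
    apply/subsetP => E /setUP [/D1P [B BD [uB ->]]|].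
      exact: mem_shadow.
    case/imsetP => F /shadowP [F' /D1P [B BD [uB ->]] [x xF ->]] ->.
    have xu : x != u by move: xF; rewrite !inE => /andP [].
    have xB : x \in B by move: xF; rewrite !inE => /andP [].
    have -> : u |: (B :\ u :\ x) = B :\ x.
      apply/setP => z; rewrite !inE.
      case: (eqVneq z u) => [->|zu] /=; first by rewrite eq_sym xu uB.
      by [].
    exact: mem_shadow.
  move/subset_leq_card; rewrite cardsU disj cards0 subn0 cI.
  by [].
- apply: subset_leq_card; apply/subsetP => E /shadowP [B /setDP [BD]].
  rewrite inE => uB [x xB ->].
  have sB : u |: (B :\ x) \in D by apply: shD.
  apply/imsetP; exists (u |: (B :\ x)).
    by rewrite inE sB inE !inE eqxx.
  by rewrite setU1K // !inE negb_and uB orbT.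
Qed.
End Split.

Section KK.
Variable T : finType.
Implicit Types (C D : {set {set T}}).

Lemma nonempty_of C m : m < #|C| -> exists A, A \in C.
Proof. by move=> h; apply/card_gt0P; apply: leq_ltn_trans h. Qed.

Lemma E_lem w q C : 0 < q -> q <= w.+1 -> unif q C -> 'C(w, q) + 1 <= #|C| ->
  'C(w, q.-1) + q.-1 <= #|shadow C|.
Proof.
elim: w q C => [|w IH] q C q0 qw uC hC.
  have q1 : q = 1 by lia.
  subst q; case: (nonempty_of (m := 0) (C := C)); first by lia.
  by move=> A AinC; rewrite bin0 addn0; exact: (shadow_ge uC AinC).
case: (ltnP w.+1 q) => [wq|qw'].
  have eq : q = w.+2 by lia.
  subst q; case: (nonempty_of (m := 0) (C := C)); first by lia.
  move=> A AinC; rewrite /= binn; have := shadow_ge uC AinC.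
move=> hh. set s := #|shadow C| in hh *. lia.
case: q q0 qw qw' uC hC => [//|[|q]] _ qw qw' uC hC.
  case: (nonempty_of (m := 0) (C := C)); first by lia.
  by move=> A AinC; rewrite bin0 addn0; exact: (shadow_ge uC AinC).
case: (split_lem uC) => D1 [D0 [u1 u0 cC s1 s0]].
have p1 := binS w q.+1; have p2 := binS w q.
case: (leqP ('C(w, q.+1) + 1) #|D1|) => h1.
  have := IH q.+1 D1 isT ltac:(lia) u1 h1; move=> hh; rewrite ?succnK in hh *; lia.
have := IH q.+2 D0 isT ltac:(lia) u0 ltac:(lia); move=> hh; rewrite ?succnK in hh *; lia.
Qed.

Lemma U_lem z q C : 3 <= q -> q <= z -> unif q C -> 'C(z, q) + 2 <= #|C| ->
  'C(z, q.-1) + q <= #|shadow C|.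
Proof.
case: q => [|[|[|q]]] // _ qz uC hC.
case: z qz hC => [//|z] qz hC.
case: (split_lem uC) => D1 [D0 [u1 u0 cC s1 s0]].
have p1 := binS z q.+1; have p2 := binS z q.+2.
case: (leqP ('C(z, q.+2) + 2) #|D1|) => h1.
  have := @E_lem z q.+2 D1 isT ltac:(lia) u1 ltac:(lia).
  move=> hh; rewrite ?succnK in hh *; lia.
have := @E_lem z q.+3 D0 isT ltac:(lia) u0 ltac:(lia).
move=> hh; rewrite ?succnK in hh *; lia.
Qed.
Lemma W_lem r y1 y2 C : y2 < y1 -> r.+2 <= y2 -> unif r.+2 C ->
  'C(y1, r.+2) + 'C(y2, r.+1) <= #|C| -> 'C(y1, r.+1) + 'C(y2, r) <= #|shadow C|.
Proof.
elim: r y1 y2 C => [|r IHr] y1; elim: y1 => [|y1 IH] y2 C //.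
- case: y2 => [//|y2] y21 y22 uC hC.
  case: (split_lem uC) => D1 [D0 [u1 u0 cC s1 s0]].
  have p1 := binS y1 1; have p2 := binS y1 0; have p3 := binS y2 1.
  have p4 := binS y2 0.
  rewrite !bin0 in p2 p4 *.
  case: (leqP ('C(y1, 1) + 'C(y2, 0)) #|D1|) => h1.
    rewrite bin0 in h1.
    case: (nonempty_of (m := 0) (C := D1)); first by lia.
    move=> A AinC; have := shadow_ge u1 AinC; lia.
  rewrite bin0 in h1.
  case: (ltnP 1 y2) => hy2.
    have := IH y2 D0 ltac:(lia) hy2 u0 ltac:(lia); rewrite bin0; lia.
  have e : y2 = 1 by lia.
  subst y2.
  have := @E_lem y1 2 D0 isT ltac:(lia) u0 ltac:(lia); rewrite !bin1 in p3 *.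
  have c21 : 'C(2,1) = 2 by [].
  have b1 := bin1 y1.
  have := @E_lem y1 2 D0 isT ltac:(lia) u0 ltac:(lia).
  move=> hh; rewrite ?succnK in hh *; lia.
- case: y2 => [//|y2] y21 y22 uC hC.
  case: (split_lem uC) => D1 [D0 [u1 u0 cC s1 s0]].
  have p1 := binS y1 r.+2; have p2 := binS y1 r.+1; have p3 := binS y2 r.+2.
  have p4 := binS y2 r.+1; have p5 := binS y2 r.
  case: (leqP ('C(y1, r.+2) + 'C(y2, r.+1)) #|D1|) => h1.
    have := IHr y1 y2 D1 ltac:(lia) ltac:(lia) u1 h1; lia.
  case: (ltnP r.+2 y2) => hy2.
    have := IH y2 D0 ltac:(lia) hy2 u0 ltac:(lia); lia.
  have e : y2 = r.+2 by lia.
  subst y2.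
  have := @E_lem y1 r.+3 D0 isT ltac:(lia) u0.
  have b1 := binSn r.+2; have b2 := binSn r.+1.
  move=> hh; have := hh ltac:(lia); rewrite ?succnK; lia.
Qed.

Lemma V_lem q x1 x2 C : x2 < x1 -> q.+3 <= x2 -> unif q.+3 C ->
  'C(x1, q.+3) + 'C(x2, q.+2) < #|C| -> 'C(x1, q.+2) + 'C(x2, q.+1) < #|shadow C|.
Proof.
elim: x1 x2 C => [|x1 IH] x2 C //.
case: x2 => [//|x2] x21 x22 uC hC.
case: (split_lem uC) => D1 [D0 [u1 u0 cC s1 s0]].
have p1 := binS x1 q.+2; have p2 := binS x1 q.+1; have p3 := binS x2 q.+1.
have p4 := binS x2 q; have p5 := binS x2 q.+2.
case: (ltnP ('C(x1, q.+2) + 'C(x2, q.+1)) #|D1|) => h1.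
  have := @W_lem q x1 x2 D1 ltac:(lia) ltac:(lia) u1 ltac:(lia); lia.
case: (ltnP q.+2 x2) => hx2.
  have := IH x2 D0 ltac:(lia) hx2 u0 ltac:(lia); lia.
have e : x2 = q.+2 by lia.
subst x2.
have := @U_lem x1 q.+3 D0 isT ltac:(lia) u0.
have b1 := binSn q.+2; have b2 := binSn q.+1.
move=> hh; have := hh ltac:(lia); rewrite ?succnK; lia.
Qed.
End KK.

Section Lev.
Variable T : finType.
Implicit Types (C D : {set {set T}}).

Definition Dlev C r := [set E : {set T} | (#|E| == r) && [exists B in C, E \subset B]].

Lemma Dlev_unif C r : unif r (Dlev C r).
Proof. by move=> E; rewrite inE => /andP [/eqP]. Qed.

Lemma Dlev_shadow p C r : unif p C -> r < p -> shadow (Dlev C r.+1) = Dlev C r.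
Proof.
move=> uC rp; apply/setP => E; apply/idP/idP.
- case/shadowP => A; rewrite inE => /andP [/eqP cA /exists_inP [B BC AB]] [x xA ->].
  rewrite inE; apply/andP; split.
    by move: cA; rewrite (cardsD1 x A) xA add1n => [[->]].
  apply/exists_inP; exists B => //; apply: subset_trans AB; exact: subD1set.
- rewrite inE => /andP [/eqP cE /exists_inP [B BC EB]].
  have : E \proper B by rewrite properEcard EB cE (uC B BC).
  case/properP => _ [z zB zE].
  apply/shadowP; exists (z |: E).
    rewrite inE cardsU1 zE cE add1n eqxx /=; apply/exists_inP; exists B => //.
    by rewrite subUset sub1set zB EB.
  exists z; first by rewrite !inE eqxx.
  by rewrite setU1K.
Qed.

Lemma Dlev_top p C : unif p C -> Dlev C p = C.
Proof.
move=> uC; apply/setP => E; apply/idP/idP.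
- rewrite inE => /andP [/eqP cE /exists_inP [B BC EB]].
  have : E == B by rewrite eqEcard EB /= (uC B BC) -cE leqnn.
  by move/eqP ->.
- move=> EC; rewrite inE (uC E EC) eqxx /=; apply/exists_inP; exists E => //.
Qed.

Lemma V_cor q x1 x2 C : 3 <= q -> x2 < x1 -> q <= x2 -> unif q C ->
  #|shadow C| <= 'C(x1, q.-1) + 'C(x2, q.-2) -> #|C| <= 'C(x1, q) + 'C(x2, q.-1).
Proof.
case: q => [|[|[|q]]] // _ h1 h2 uC hs; rewrite leqNgt; apply/negP => h.
have := V_lem h1 h2 uC h; rewrite ltnNge hs //.
Qed.

Lemma chain a p C M1 M2 : unif p C -> 2 <= a -> a <= p -> p <= M2 -> M2 < M1 ->
  #|Dlev C a| <= 'C(M1, a) + 'C(M2, a.-1) -> #|C| <= 'C(M1, p) + 'C(M2, p.-1).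
Proof.
move=> uC a2 ap pM M12 h0.
have key : forall i, a + i <= p -> #|Dlev C (a + i)| <= 'C(M1, a + i) + 'C(M2, (a + i).-1).
  elim => [|i IH] h; first by rewrite addn0.
  rewrite addnS; apply: V_cor.
  - lia.
  - exact: M12.
  - lia.
  - exact: Dlev_unif.
  - rewrite (Dlev_shadow uC); last by lia.
    exact: IH ltac:(lia).
have := key (p - a) ltac:(lia).
by rewrite subnKC // (Dlev_top uC).
Qed.
End Lev.
Unset Implicit Arguments.

Theorem mainTheorem12 (n k : nat) (F G : {set {set 'I_n}}) (x y : 'I_n) :
  4 <= k -> 2 * k <= n ->
  k_uniform k F -> k_uniform k G ->
  cross_intersecting F G ->
  x != y ->
  'C(n - 3, k - 3) + 'C(n - 4, k - 3) + 'C(n - 6, k - 4) <= #|link2 F x y| ->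
  #|avoid2 G x y| <= 'C(n - 5, k - 3) + 'C(n - 6, k - 3).
Proof.
move=> hk hn uF uG cross xy hF.
set X := [set x; y].
set Bf := avoid2 G x y.
set Af := link2 F x y.
have cX : #|X| = 2 by rewrite /X cards2 xy.
have BfP : forall B, B \in Bf -> B \in G /\ [disjoint B & X].
  by move=> B; rewrite inE => /andP.
pose Cf := [set ~: B :\: X | B in Bf].
have cCf : #|Cf| = #|Bf|.
  apply: card_in_imset => B B' /BfP [_ dB] /BfP [_ dB'] e.
  apply/setP => z; move/setP/(_ z): e; rewrite !in_setD !in_setC.
  case zX: (z \in X) => /=.
    by rewrite (disjointFl dB zX) (disjointFl dB' zX).
  by move/negb_inj.
have uC : unif (n - k - 2) Cf.
  move=> E /imsetP [B /BfP [BG dB] ->].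
  have -> : ~: B :\: X = ~: (B :|: X) by rewrite setCU setDE setIC.
  have := cardsC (B :|: X); rewrite cardsU (disjoint_setI0 dB) cards0 subn0.
  rewrite card_ord (uG B BG) cX; lia.
have dis : forall E, E \in Af -> E \in Dlev Cf (k - 2) -> False.
  move=> E /imsetP [A]; rewrite inE => /andP [AF XA] ->.
  rewrite inE => /andP [_ /exists_inP [D /imsetP [B /BfP [BG dB] ->] sub]].
  have := cross A B AF BG; case/set0Pn => z; rewrite inE => /andP [zA zB].
  case zX: (z \in X); first by rewrite (disjointFl dB zX) in zB.
  have : z \in A :\: X by rewrite inE zX zA.
  by move/(subsetP sub); case/setDP => /setCP nb _; exact: nb zB.
pose K := [set E : {set 'I_n} | E \subset ~: X & #|E| == k - 2].
have cK : #|K| = 'C(n - 2, k - 2).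
  rewrite cards_draws; congr 'C(_, _).
  have := cardsC X; rewrite card_ord cX => h; apply/eqP; rewrite -(eqn_add2l 2) subnKC; last by lia.
  by apply/eqP; exact: h.
have sK : Af :|: Dlev Cf (k - 2) \subset K.
  apply/subsetP => E /setUP [].
    case/imsetP => A; rewrite inE => /andP [AF XA] ->.
    rewrite inE; apply/andP; split.
      by apply/subsetP => z; rewrite !inE => /andP [].
    rewrite cardsD (setIidPr XA) (uF A AF) cX; apply/eqP; lia.
  rewrite inE => /andP [cE /exists_inP [D /imsetP [B _ ->] sub]].
  rewrite inE cE andbT; apply: subset_trans sub _.
  by apply/subsetP => z; rewrite !inE => /andP [].
have sumK : #|Af| + #|Dlev Cf (k - 2)| <= 'C(n - 2, k - 2).
  rewrite -cK; apply: leq_trans (subset_leq_card sK).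
  rewrite cardsU.
  have -> : Af :&: Dlev Cf (k - 2) = set0.
    apply/setP => E; rewrite in_setI in_set0; apply/negP => /andP [h1 h2].
    exact: dis h1 h2.
  by rewrite cards0 subn0.
have arith : 'C(n - 2, k - 2) = 'C(n - 3, k - 3) + 'C(n - 4, k - 3) + 'C(n - 6, k - 4)
    + 'C(n - 5, k - 2) + 'C(n - 6, (k - 2).-1).
  have e1 : n - 2 = (n - 6).+4 by lia.
  have e2 : n - 3 = (n - 6).+3 by lia.
  have e3 : n - 4 = (n - 6).+2 by lia.
  have e4 : n - 5 = (n - 6).+1 by lia.
  have f1 : k - 2 = (k - 4).+2 by lia.
  have f2 : k - 3 = (k - 4).+1 by lia.
  rewrite e1 e2 e3 e4 f1 f2 /=.
  set N := n - 6; set M := k - 4.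
  have := binS N.+3 M.+1; have := binS N.+2 M.+1; have := binS N.+1 M.+1.
  have := binS N M; lia.
have hF' : 'C(n - 3, k - 3) + 'C(n - 4, k - 3) + 'C(n - 6, k - 4) <= #|Af| := hF.
have hD : #|Dlev Cf (k - 2)| <= 'C(n - 5, k - 2) + 'C(n - 6, (k - 2).-1).
  move: sumK hF'; rewrite arith.
  set a1 := #|Af|; set a2 := #|Dlev Cf (k - 2)|; set b1 := 'C(n - 3, k - 3); set b2 := 'C(n - 4, k - 3); set b3 := 'C(n - 6, k - 4); set b4 := 'C(n - 5, k - 2); set b5 := 'C(n - 6, (k - 2).-1).
  lia.
have := @chain _ (k - 2) (n - k - 2) Cf (n - 5) (n - 6) uC ltac:(lia) ltac:(lia) ltac:(lia) ltac:(lia) hD.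
have -> : n - k - 2 = (n - 5) - (k - 3) by lia.
have -> : ((n - 5) - (k - 3)).-1 = (n - 6) - (k - 3) by lia.
rewrite !bin_sub; try lia.
by rewrite -cCf.
Qed.
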